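(* Let $\phi=(\phi_i)_{i\ge1}$ be a sequence of real numbers and define $\mathcal{H}_0^{\phi}=1$ and, for $n\ge0$, $\mathcal{H}_{n+1}^{\phi}(x)=2x\mathcal{H}_n^{\phi}(x)-(\mathcal{H}_n^{\phi})'(x)+\phi_{n+1}\mathcal{H}_n^{\phi}(x)$. For $n\ge0$ let $\Phi_0^n=1$ and $\Phi_i^n=\sum_{1\le j_1<\dots<j_i\le n}\phi_{j_1}\cdots\phi_{j_i}$ for $1\le i\le n$ (so that $\prod_{i=1}^n(x+\phi_i)=\sum_{j=0}^n\Phi^n_{n-j}x^j$). Then for every $n\ge0$, $$\mathcal{H}_n^{\phi}(x)=\sum_{j=0}^n\Phi_{n-j}^nH_j(x).$$ Moreover, for every $l\ge1$ and every $n\ge l-1$, $$\mathcal{H}_{n+1}^{\phi}(x)=2x\mathcal{H}_n^{\phi^{\{l\}}}(x)-(\mathcal{H}_n^{\phi^{\{l\}}})'(x)+\phi_l\,\mathcal{H}_n^{\phi^{\{l\}}}(x),$$ where $\phi^{\{l\}}$ is the sequence obtained from $\phi$ by removing the term $\phi_l$, i.e. $\phi^{\{l\}}_i=\phi_i$ for $1\le i\le l-1$ and $\phi^{\{l\}}_i=\phi_{i+1}$ for $i\ge l$.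
   Context: $H_j$ denotes the standard (physicists') Hermite polynomial of degree $j$ (orthogonal with respect to $e^{-x^2}$, leading coefficient $2^j$). *)

(* Defs.v *)
From HB Require Import structures.
From mathcomp Require Import all_boot all_order all_algebra.
From mathcomp Require Import reals.
Set Implicit Arguments. Unset Strict Implicit. Unset Printing Implicit Defensive.
Import Order.TTheory GRing.Theory Num.Theory.
Local Open Scope ring_scope.

Fixpoint hermite (R : realType) (n : nat) : {poly R} :=
  match n with
  | 0%N => 1
  | n'.+1 => 2%:P * 'X * hermite R n' - (hermite R n')^`()
  end.

(* The generalized Hermite polynomials H^phi_n; phi is indexed from 1
   (phi 0 is never used). *)
Fixpoint hermite_phi (R : realType) (phi : nat -> R) (n : nat) : {poly R} :=
  match n with
  | 0%N => 1
  | n'.+1 => 2%:P * 'X * hermite_phi phi n' - (hermite_phi phi n')^`()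
             + (phi n'.+1)%:P * hermite_phi phi n'
  end.

Definition Phi (R : realType) (phi : nat -> R) (n i : nat) : R :=
  \sum_(S : {set 'I_n} | #|S| == i) \prod_(j in S) phi (nat_of_ord j).+1.

Definition remove_term (R : realType) (phi : nat -> R) (l : nat) : nat -> R :=
  fun i => if (i < l)%N then phi i else phi i.+1.

(* Main.v *)
Require Import Defs.
From HB Require Import structures.
From mathcomp Require Import all_boot all_order all_algebra.
From mathcomp Require Import reals.
Import Order.TTheory GRing.Theory Num.Theory.
Local Open Scope ring_scope.

Section H.
Variable R : realType.

Definition Lh (q : {poly R}) := \sum_(i < size q) (q`_i)%:P * hermite R i.
Definition Th (h : {poly R}) := 2%:P * 'X * h - h^`().

Lemma Lh_bound (q : {poly R}) m : (size q <= m)%N -> Lh q = \sum_(i < m) (q`_i)%:P * hermite R i.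
Proof.
move=> hm; rewrite /Lh (big_ord_widen _ (fun i => (q`_i)%:P * hermite R i) hm) big_mkcond /=.
apply: eq_bigr => i _; case: ifP => // /negbT; rewrite -leqNgt => hi.
by rewrite nth_default // mul0r.
Qed.

Lemma Lh_add (p q : {poly R}) : Lh (p + q) = Lh p + Lh q.
Proof.
rewrite (@Lh_bound _ (maxn (size p) (size q))); last exact: size_polyD.
rewrite (@Lh_bound p (maxn (size p) (size q))) ?leq_maxl //.
rewrite (@Lh_bound q (maxn (size p) (size q))) ?leq_maxr //.
rewrite -big_split /=; apply: eq_bigr => i _.
by rewrite coefD polyCD mulrDl.
Qed.

Lemma Lh_scale c (q : {poly R}) : Lh (c%:P * q) = c%:P * Lh q.
Proof.
rewrite (@Lh_bound _ (size q)); last by rewrite mul_polyC size_scale_leq.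
rewrite /Lh mulr_sumr; apply: eq_bigr => i _.
by rewrite coefCM polyCM mulrA.
Qed.

Lemma Th_sum m (F : nat -> {poly R}) (c : nat -> R) :
  Th (\sum_(i < m) (c i)%:P * F i) = \sum_(i < m) (c i)%:P * Th (F i).
Proof.
rewrite /Th raddf_sum mulr_sumr -sumrB; apply: eq_bigr => i _.
by rewrite (_ : forall x : {poly R}, poly_deriv__canonical__Algebra_Additive R x = x^`()) // derivM derivC mul0r add0r mulrBr mulrCA.
Qed.

Lemma Lh_X (q : {poly R}) : Lh ('X * q) = Th (Lh q).
Proof.
rewrite (@Lh_bound _ (size q).+1); last first.
  case: (eqVneq q 0) => [->|qn0]; first by rewrite mulr0 size_poly0.
  by rewrite mulrC size_mulX.
rewrite big_ord_recl coefXM /= polyC0 mul0r add0r /Lh Th_sum.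
by apply: eq_bigr => i _; rewrite coefXM /=.
Qed.

Lemma Lh_1 : Lh 1 = 1.
Proof. by rewrite /Lh size_poly1 big_ord1 coefC /= mul1r. Qed.

Definition Pp (phi : nat -> R) n := \prod_(0 <= i < n) ('X + (phi i.+1)%:P).

Lemma Lh_step phi c n : Lh (Pp phi n * ('X + c%:P)) =
  Th (Lh (Pp phi n)) + c%:P * Lh (Pp phi n).
Proof.
by rewrite mulrDr mulrC Lh_add Lh_X mulrC Lh_scale.
Qed.

Lemma hphi_Lh phi n : hermite_phi phi n = Lh (Pp phi n).
Proof.
elim: n => [|n IH]; first by rewrite /Pp big_geq // Lh_1.
by rewrite /Pp big_nat_recr //= -/(Pp phi n) Lh_step -IH.
Qed.

Lemma Pp_coef phi n j : (j <= n)%N -> (Pp phi n)`_j = Phi phi n (n - j).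
Proof.
move=> hj.
pose ps := [seq - phi i.+1 | i <- iota 0 n].
have Hs : size ps = n by rewrite size_map size_iota.
have -> : Pp phi n = \prod_(p <- ps) ('X - p%:P).
  by rewrite /Pp big_map /index_iota subn0; apply: eq_bigr => i _; rewrite polyCN opprK.
rewrite coef_prod_XsubC ?Hs //.
move: (size ps) Hs => m Hm; subst m.
rewrite mulr_sumr /Phi; apply: eq_bigr => S /eqP hS.
have -> : \prod_(i in S) ps`_i = \prod_(i in S) - phi (nat_of_ord i).+1.
  apply: eq_bigr => i _.
  by rewrite (nth_map 0%N) ?size_iota // nth_iota.
by rewrite prodrN hS mulrA -exprD -signr_odd addnn odd_double expr0 mul1r.
Qed.

Lemma size_Pp phi n : (size (Pp phi n) <= n.+1)%N.
Proof.
pose ps := [seq - phi i.+1 | i <- iota 0 n].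
have -> : Pp phi n = \prod_(p <- ps) ('X - p%:P).
  by rewrite /Pp big_map /index_iota subn0; apply: eq_bigr => i _; rewrite polyCN opprK.
by rewrite size_prod_XsubC size_map size_iota.
Qed.

Lemma Pp_remove phi l n : (1 <= l)%N -> (l.-1 <= n)%N ->
  Pp phi n.+1 = ('X + (phi l)%:P) * Pp (remove_term phi l) n.
Proof.
case: l => // k _ /= hk.
rewrite /Pp (@big_cat_nat _ _ _ k) //=; last by apply: leqW.
rewrite (@big_cat_nat _ _ _ k 0 n) //= [\prod_(k <= i < n.+1) _]big_ltn ?ltnS //.
rewrite mulrCA; congr (_ * (_ * _)).
  by apply: eq_big_nat => i /andP [_ hi]; rewrite /remove_term ltnS hi.
rewrite big_add1 /=; apply: eq_big_nat => i /andP [hi _].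
by rewrite /remove_term ltnS ltnNge hi.
Qed.

End H.

Theorem lemma3p5 (R : realType) (phi : nat -> R) :
  (forall n : nat,
     hermite_phi phi n = \sum_(0 <= j < n.+1) (Phi phi n (n - j))%:P * hermite R j)
  /\
  (forall l n : nat, (1 <= l)%N -> (l.-1 <= n)%N ->
     hermite_phi phi n.+1 =
       2%:P * 'X * hermite_phi (remove_term phi l) n
       - (hermite_phi (remove_term phi l) n)^`()
       + (phi l)%:P * hermite_phi (remove_term phi l) n).
Proof.
split.
  move=> n; rewrite hphi_Lh (@Lh_bound R _ _ (@size_Pp R phi n)) big_mkord.
  by apply: eq_bigr => i _; rewrite Pp_coef // -ltnS.
move=> l n hl hn.
rewrite !hphi_Lh (@Pp_remove R phi _ _ hl hn) mulrDl Lh_add Lh_X Lh_scale.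
by [].
Qed.
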